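(* Every closure semilattice can be embedded into some closure space. That is, if $\mathbf S=(S,\vee_{\mathbf S},K_{\mathbf S})$ is a closure semilattice, then there exist a set $X$, a closure operation $K$ on $\mathcal P(X)$ and an injective map $\varphi:S\to\mathcal P(X)$ such that $\varphi(a\vee_{\mathbf S}b)=\varphi(a)\cup\varphi(b)$ and $\varphi(K_{\mathbf S}a)=K\varphi(a)$ for all $a,b\in S$.
   Context: A closure operation on a poset is a unary operation $K$ which is extensive ($x\le Kx$), idempotent ($KKx=Kx$) and isotone ($x\le y\Rightarrow Kx\le Ky$). A closure semilattice is a join semilattice endowed with a closure operation (with respect to the order induced by the join). A closure space is a set $X$ with a closure operation $K$ on $(\mathcal P(X),\subseteq)$, regarded as the structure $(\mathcal P(X),\cup,K)$. *)

(* Defs.v *)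
From HB Require Import structures.
From mathcomp Require Import all_boot all_order.
Set Implicit Arguments. Unset Strict Implicit. Unset Printing Implicit Defensive.
Import Order.TTheory.
Local Open Scope order_scope.

Definition closure_op_on (P : Type) (le : P -> P -> Prop) (K : P -> P) : Prop :=
  [/\ (forall x, le x (K x)),
      (forall x, K (K x) = K x)
    & (forall x y, le x y -> le (K x) (K y))].

(* Closure operation on a join semilattice, w.r.t. the order induced by join
   (in mathcomp, x <= y is equivalent to x `|` y = y). *)
Definition closure_op {d : Order.disp_t} (S : joinSemilatticeType d) (K : S -> S) : Prop :=
  closure_op_on (fun x y : S => x <= y) K.

Definition subset_of (X : Type) (A B : X -> Prop) : Prop := forall x, A x -> B x.

Definition union_of (X : Type) (A B : X -> Prop) : X -> Prop := fun x => A x \/ B x.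

Definition closure_space_op (X : Type) (K : (X -> Prop) -> (X -> Prop)) : Prop :=
  closure_op_on (@subset_of X) K.

(* Main.v *)
Require Import Defs.
From HB Require Import structures.
From mathcomp Require Import all_boot all_order.
From Stdlib Require Import Classical FunctionalExtensionality PropExtensionality.
Local Open Scope order_scope.
Import Order.TTheory.

Lemma pred_ext (X : Type) (A B : X -> Prop) : (forall x, A x <-> B x) -> A = B.
Proof. move=> H; apply: functional_extensionality => x; exact: propositional_extensionality. Qed.

Theorem theorem5p1 (d : Order.disp_t) (S : joinSemilatticeType d) (KS : S -> S) :
  closure_op KS ->
  exists (X : Type) (K : (X -> Prop) -> (X -> Prop)) (phi : S -> (X -> Prop)),
    [/\ closure_space_op K,
        injective phi,
        (forall a b : S, phi (a `|` b) = union_of (phi a) (phi b))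
      & (forall a : S, phi (KS a) = K (phi a))].
Proof.
case=> ext idem mono.
pose phi := fun (a : S) (c : S) => ~ (a <= c).
pose K := fun (A : S -> Prop) (x : S) =>
  forall a, subset_of A (phi (KS a)) -> phi (KS a) x.
have phile : forall a b, subset_of (phi a) (phi b) -> a <= b.
  move=> a b H; apply: NNPP => nab; exact: (H b nab).
have lephi : forall a b, a <= b -> subset_of (phi a) (phi b).
  move=> a b ab c nac bc; apply: nac; exact: le_trans ab bc.
exists S, K, phi; split.
- split.
  + by move=> A x Ax a H; apply: H.
  + move=> A; apply: pred_ext => x; split.
    * move=> H a HA; apply: H => y Ky; exact: Ky a HA.
    * by move=> Ax a H; apply: H.
  + move=> A B AB x KA a HB; apply: KA => y Ay; exact: HB y (AB y Ay).
- move=> a b E; apply/eqP; rewrite eq_le; apply/andP; split;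
    apply: phile; by rewrite E.
- move=> a b; apply: pred_ext => c; rewrite /phi /union_of leUx; split.
  + move=> H; apply: NNPP => H'; apply: H; apply/andP; split;
      apply: NNPP => H2; apply: H'; by [left|right].
  + by case=> H /andP [H1 H2]; apply: H.
- move=> a; apply: pred_ext => x; split.
  + move=> Hx b Hb; have ab := phile _ _ Hb.
    have : KS a <= KS b by rewrite -(idem b); exact: mono.
    by move/lephi; apply.
  + move=> H; apply: H; apply: lephi; exact: ext.
Qed.
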